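(* With the notation below, for every $v\in\hat T\setminus\partial\hat T$, $$m_v=\theta\sum_{w:(v,w)\in\hat T}D_w^*\Big(\int f(x_w^\xi)\,dQ_w^+(\xi)-\int f(x_w^\xi)\,dQ_w^-(\xi)\Big),\qquad f(x)=\log\frac{\cosh(x/2)+\theta\sinh(x/2)}{\cosh(x/2)-\theta\sinh(x/2)}.$$
   Context: $T$ is a finite rooted tree (root $\rho$, leaves $\partial T$, $T_v$ the subtree of $v$ and its descendants), $\beta>0$, $\theta=\tanh\beta$, Ising Gibbs density $\propto\exp(\beta\sum_{uv}\sigma(u)\sigma(v))$, $\tau\in\{\pm1\}^{\partial T}$, and $\mu_v^\tau$ is the Gibbs measure on $T_v$ conditioned on $\tau$ on $\partial T\cap T_v$. $\hat T$ is a connected subtree of $T\setminus\partial T$ containing $\rho$ with leaves $\partial\hat T$, $\hat T_v=T_v\cap\hat T$; $\hat\mu_v^\xi$ is the Gibbs measure on $\hat T_v$ conditioned on $\xi\in\{\pm1\}^{\partial\hat T}$ on $\partial\hat T\cap\hat T_v$. $Q_v^{\pm}(\xi)=\mu_v^\tau(\sigma_{\partial\hat T_v}=\xi_{\partial\hat T_v}\mid\sigma(v)=\pm1)$; $x_v^\xi=\log\big(\hat\mu_v^\xi(\sigma(v)=1)/\hat\mu_v^\xi(\sigma(v)=-1)\big)$ (equal to $\pm\infty$ at leaves of $\hat T$); $m_v=\int x_v^\xi dQ_v^+-\int x_v^\xi dQ_v^-$; $x_w^*=\log\big(\mu_w^\tau(\sigma(w)=1)/\mu_w^\tau(\sigma(w)=-1)\big)$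 and $D_w^*=\cosh^2\beta/(\cosh^2\beta+\cosh^2(x_w^*/2)-1)$. *)

(* Defs.v *)
From HB Require Import structures.
From mathcomp Require Import all_boot.
From Stdlib Require Import Reals.
Set Implicit Arguments. Unset Strict Implicit. Unset Printing Implicit Defensive.
Local Open Scope R_scope.

Notation "\rsum_ ( i | P ) F" := (\big[Rplus/0%R]_(i | P) F%R)
  (at level 41, F at level 41, i at level 50).

(* Rooted tree on a finite vertex type V: root rho, parent map par with
   par rho = rho and every vertex reaching rho by iterating par.
   The edges are {w, par w} for w <> rho. *)
Definition is_rooted_tree (V : finType) (rho : V) (par : V -> V) : Prop :=
  par rho = rho /\ (forall v, exists k, iter k par v = rho).

Section Tree.
Variables (V : finType) (rho : V) (par : V -> V).

Definition child (v w : V) : bool := (w != rho) && (par w == v).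

(* w belongs to T_v (w is v or a descendant of v); a path from w up to v
   has length < #|V|. *)
Definition desc (v w : V) : bool := [exists k : 'I_#|V|, iter k par w == v].

Definition leafT (u : V) : bool := [forall w, ~~ child u w].

Definition leafHat (Th : {set V}) (u : V) : bool :=
  (u \in Th) && [forall w, ~~ (child u w && (w \in Th))].

(* Th is a connected subtree of T \ dT containing rho
   (in a rooted tree: contains rho and closed under taking parents) *)
Definition good_subtree (Th : {set V}) : Prop :=
  rho \in Th /\ (forall u, u \in Th -> ~~ leafT u) /\
  (forall u, u \in Th -> u != rho -> par u \in Th).

Definition spin (b : bool) : R := if b then 1%R else (-1)%R.

Definition config := {ffun V -> bool}.

(* Ising Gibbs measure on the vertex set S (a subtree with top vertex r),
   conditioned on sigma = eta on the boundary set B.  A configuration on S is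
   encoded as an element of config that equals true outside S. *)
Definition admissible (S B : pred V) (eta : V -> bool) (s : config) : bool :=
  [forall u, if S u then (B u ==> (s u == eta u)) else s u].

Definition weight (beta : R) (S : pred V) (r : V) (s : config) : R :=
  exp (beta * \rsum_(w | S w && (w != r)) (spin (s w) * spin (s (par w)))).

Definition gibbs (beta : R) (S : pred V) (r : V) (B : pred V)
    (eta : V -> bool) (E : pred config) : R :=
  (\rsum_(s | admissible S B eta s && E s) weight beta S r s) /
  (\rsum_(s | admissible S B eta s) weight beta S r s).

Variables (beta : R) (tau : V -> bool) (Th : {set V}).

Definition mu (v : V) (E : pred config) : R :=
  gibbs beta (desc v) v (fun u => desc v u && leafT u) tau E.

Definition dHat (v : V) : pred V := fun u => leafHat Th u && desc v u.

Definition Q (b : bool) (v : V) (xi : config) : R :=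
  mu v (fun s => (s v == b) && [forall u, dHat v u ==> (s u == xi u)]) /
  mu v (fun s => s v == b).

(* integral of g against a (signed) measure Q on {+-1}^{dHat_v} *)
Definition integ (v : V) (Qm : config -> R) (g : config -> R) : R :=
  \big[Rplus/0]_(xi : config | [forall u, dHat v u || xi u]) (g xi * Qm xi).

Definition muhat (v : V) (xi : V -> bool) (E : pred config) : R :=
  gibbs beta (fun u => desc v u && (u \in Th)) v (dHat v) xi E.

Definition xhat (v : V) (xi : config) : R :=
  ln (muhat v xi (fun s => s v) / muhat v xi (fun s => ~~ s v)).

(* extended reals, for x_v^xi = +-infinity at leaves of hat T *)
Inductive ER := Fin of R | PInf | NInf.

Definition xext (v : V) (xi : config) : ER :=
  if leafHat Th v then (if xi v then PInf else NInf) else Fin (xhat v xi).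

Definition m (v : V) : R :=
  integ v (Q true v) (xhat v) - integ v (Q false v) (xhat v).

Definition xstar (w : V) : R :=
  ln (mu w (fun s => s w) / mu w (fun s => ~~ s w)).

Definition Dstar (w : V) : R :=
  cosh beta ^ 2 / (cosh beta ^ 2 + cosh (xstar w / 2) ^ 2 - 1).

Definition theta : R := tanh beta.

Definition f (x : R) : R :=
  ln ((cosh (x / 2) + theta * sinh (x / 2)) / (cosh (x / 2) - theta * sinh (x / 2))).

(* f extended continuously to +-infinity: f(+-oo) = +- ln((1+theta)/(1-theta)) *)
Definition fext (x : ER) : R :=
  match x with
  | Fin r => f r
  | PInf => ln ((1 + theta) / (1 - theta))
  | NInf => - ln ((1 + theta) / (1 - theta))
  end.

End Tree.

(* Main.v *)
Require Import Defs.
From HB Require Import structures.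
From mathcomp Require Import all_boot.
From Stdlib Require Import Reals Lra Lia Field.
Set Implicit Arguments. Unset Strict Implicit. Unset Printing Implicit Defensive.

Section TreeFacts.
Variables (V : finType) (rho : V) (par : V -> V).
Hypothesis Htree : is_rooted_tree rho par.

Lemma cycle_rho x n : iter n.+1 par x = x -> x = rho.
Proof.
move=> Hc; have [k Hk] := (proj2 Htree) x.
have Hm : forall m, iter (m * n.+1) par x = x.
  elim=> [|m IH] //; by rewrite mulSn iterD IH Hc.
rewrite -(Hm k).
have Hle : leq k (k * n.+1) by rewrite leq_pmulr.
rewrite -(subnK Hle) iterD Hk iter_fix //; exact: (proj1 Htree).
Qed.

Lemma reach_bound u : exists2 k, ltn k #|V| & iter k par u = rho.
Proof.
have ex : exists k, iter k par u == rho.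
  by have [k Hk] := (proj2 Htree) u; exists k; apply/eqP.
case: (ex_minnP ex) => k0 /eqP Hk0 Hmin.
exists k0 => //.
pose g := fun i : 'I_k0.+1 => iter i par u.
have inj : injective g.
  move=> i j; rewrite /g => Hij; apply/val_inj => /=.
  wlog lt : i j Hij / leq i j.
    move=> W; case: (leqP i j) => h; first exact: W.
    by symmetry; apply: W => //; apply: ltnW.
  apply/eqP; rewrite eqn_leq lt /=; apply/negP => /negP; rewrite -ltnNge => ltij.
  have hj : leq j k0 by rewrite -ltnS.
  have : iter (k0 - (j - i)) par u == rho.
    have e : (k0 - (j - i) = (k0 - j) + i)%N.
      by rewrite subnBA ?(ltnW ltij) // addnC -addnBA // addnC.
    by rewrite e iterD Hij -iterD subnK // Hk0.
  move/Hmin; rewrite leqNgt => /negP; apply.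
  rewrite ltn_subrL subn_gt0 ltij /=.
  exact: leq_ltn_trans (leq0n i) (leq_trans ltij hj).
by have := @leq_card _ _ g inj; rewrite card_ord.
Qed.

Lemma descP w u : reflect (exists k, iter k par u = w) (desc par w u).
Proof.
apply: (iffP existsP).
  by move=> [k /eqP Hk]; exists k.
move=> [k Hk].
have [k0 lt0 H0] := reach_bound u.
case: (leqP k k0) => hk.
  by exists (Ordinal (leq_ltn_trans hk lt0)); apply/eqP.
exists (Ordinal lt0); apply/eqP => /=.
rewrite H0 -Hk -(subnK (ltnW hk)) iterD H0 iter_fix //; exact: (proj1 Htree).
Qed.

Lemma desc_refl w : desc par w w.
Proof. by apply/descP; exists 0%N. Qed.

Lemma desc_par w u : desc par w (par u) -> desc par w u.
Proof. by move/descP => [k Hk]; apply/descP; exists k.+1; rewrite iterSr. Qed.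

Lemma desc_trans a b c : desc par a b -> desc par b c -> desc par a c.
Proof.
move/descP => [i Hi] /descP [j Hj]; apply/descP; exists (i + j)%N.
by rewrite iterD Hj.
Qed.

Lemma desc_par2 w u : desc par w u -> u != w -> desc par w (par u).
Proof.
move/descP => [[|k] Hk]; first by rewrite /= in Hk; rewrite Hk eqxx.
by move=> _; apply/descP; exists k; rewrite -iterSr.
Qed.

Lemma desc_rho w : desc par w rho -> w = rho.
Proof.
by move/descP => [k Hk]; rewrite -Hk iter_fix //; exact: (proj1 Htree).
Qed.

Lemma desc_antisym a b : desc par a b -> desc par b a -> a = b.
Proof.
move/descP => [i Hi] /descP [j Hj].
case: i Hi => [|i] Hi; first by rewrite -Hi.
have : iter (i.+1 + j) par a = a by rewrite iterD Hj Hi.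
rewrite addSn => /cycle_rho Ha.
rewrite -Hj Ha; symmetry; apply: iter_fix; exact: (proj1 Htree).
Qed.

Lemma desc_total a b u : desc par a u -> desc par b u -> desc par a b \/ desc par b a.
Proof.
move/descP => [i Hi] /descP [j Hj].
case: (leqP i j) => h.
  right; apply/descP; exists (j - i)%N; by rewrite -Hi -iterD subnK.
left; apply/descP; exists (i - j)%N; by rewrite -Hj -iterD subnK // ltnW.
Qed.

Lemma child_par v w : child rho par v w -> par w = v /\ w != rho.
Proof. by move/andP => [h /eqP]. Qed.

Lemma child_desc v w : child rho par v w -> desc par v w.
Proof. move/child_par => [h _]; apply/descP; exists 1%N; by rewrite /= h. Qed.

Lemma child_not_desc v w : child rho par v w -> ~~ desc par w v.
Proof.
move=> c; apply/negP => d.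
have e := desc_antisym d (child_desc c).
have [hp hr] := child_par c.
have : iter 1 par w = w by rewrite /= hp e.
by move/cycle_rho => hw; rewrite hw eqxx in hr.
Qed.

Lemma child_disj v w1 w2 u : child rho par v w1 -> child rho par v w2 ->
  desc par w1 u -> desc par w2 u -> w1 = w2.
Proof.
move=> c1 c2 d1 d2.
have gen : forall a b, child rho par v a -> child rho par v b -> desc par a b -> a = b.
  move=> a b ca cb dab; apply/eqP; apply/negP => /negP nab.
  have : desc par a (par b) by apply: desc_par2 => //; rewrite eq_sym.
  by rewrite (proj1 (child_par cb)) (negbTE (child_not_desc ca)).
case: (desc_total d1 d2) => h; first exact: gen.
by symmetry; apply: gen.
Qed.

Lemma desc_child v u : desc par v u -> u != v ->
  exists2 w, child rho par v w & desc par w u.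
Proof.
move=> d nuv.
have ex : exists k, iter k par u == v by move/descP: d => [k Hk]; exists k; apply/eqP.
case: (ex_minnP ex) => k /eqP Hk Hmin.
case: k Hk Hmin => [|k] Hk Hmin; first by rewrite /= in Hk; rewrite Hk eqxx in nuv.
exists (iter k par u); last by apply/descP; exists k.
apply/andP; split; last by apply/eqP.
apply/negP => /eqP hr.
have : iter k par u == v.
  by rewrite -Hk /= hr (proj1 Htree).
by move/Hmin; rewrite ltnn.
Qed.

Lemma not_desc_of_rho_ne u v : desc par v u -> u != v -> u != rho.
Proof.
move=> d nuv; apply/negP => /eqP hu; subst u.
by rewrite (desc_rho d) eqxx in nuv.
Qed.

End TreeFacts.

Local Open Scope R_scope.

Lemma Rplus_assoc' : associative Rplus. Proof. by move=> x y z; rewrite Rplus_assoc. Qed.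
Lemma Rmult_assoc' : associative Rmult. Proof. by move=> x y z; rewrite Rmult_assoc. Qed.
HB.instance Definition _ := Monoid.isComLaw.Build R 0%R Rplus Rplus_assoc' Rplus_comm Rplus_0_l.
HB.instance Definition _ := Monoid.isComLaw.Build R 1%R Rmult Rmult_assoc' Rmult_comm Rmult_1_l.
HB.instance Definition _ := Monoid.isMulLaw.Build R 0%R Rmult Rmult_0_l Rmult_0_r.
HB.instance Definition _ := Monoid.isAddLaw.Build R Rmult Rplus Rmult_plus_distr_r Rmult_plus_distr_l.

Section Gen.
Variable V : finType.
Implicit Types (s t : config V).

Definition mrg (C : pred V) (s1 s2 : config V) : config V :=
  [ffun u => if C u then s2 u else s1 u].
Definition offC (C : pred V) (s : config V) : config V :=
  [ffun u => if C u then true else s u].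
Definition onC (C : pred V) (s : config V) : config V :=
  [ffun u => if C u then s u else true].

Lemma sum_split (C : pred V) (P1 P2 : pred (config V)) (F1 F2 : config V -> R) :
  (forall s t, (forall u, ~~ C u -> s u = t u) -> P1 s = P1 t /\ F1 s = F1 t) ->
  (forall s t, (forall u, C u -> s u = t u) -> P2 s = P2 t /\ F2 s = F2 t) ->
  \rsum_(s | P1 s && P2 s) (F1 s * F2 s) =
  (\rsum_(s | P1 s && [forall u, C u ==> s u]) F1 s) *
  (\rsum_(s | P2 s && [forall u, ~~ C u ==> s u]) F2 s).
Proof.
move=> H1 H2.
rewrite (partition_big (offC C) (fun s => P1 s && [forall u, C u ==> s u])); last first.
  move=> s /andP[P1s _]; apply/andP; split.
    by rewrite (proj1 (H1 (offC C s) s _)) // => u Cu; rewrite ffunE (negbTE Cu).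
  by apply/forallP => u; apply/implyP => Cu; rewrite ffunE Cu.
rewrite big_distrl /=; apply: eq_bigr => s1 /andP[P1s1 /forallP s1C].
rewrite big_distrr /=.
rewrite (reindex_onto (mrg C s1) (onC C)); last first.
  move=> s /andP[_ /eqP <-]; apply/ffunP => u; rewrite !ffunE; by case: (C u).
apply: eq_big.
  move=> s2; apply/idP/idP.
  - move=> /andP[/andP[/andP[_ P2m] _] /eqP E].
    have E2 : forall u, C u -> mrg C s1 s2 u = s2 u by move=> u Cu; rewrite ffunE Cu.
    rewrite -(proj1 (H2 _ _ E2)) P2m /=.
    apply/forallP => u; apply/implyP => nCu.
    by move/ffunP: E => /(_ u); rewrite !ffunE (negbTE nCu) => <-.
  - move=> /andP[P2s2 /forallP s2C].
    have E1 : forall u, ~~ C u -> mrg C s1 s2 u = s1 u by move=> u Cu; rewrite ffunE (negbTE Cu).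
    have E2 : forall u, C u -> mrg C s1 s2 u = s2 u by move=> u Cu; rewrite ffunE Cu.
    rewrite (proj1 (H1 _ _ E1)) (proj1 (H2 _ _ E2)) P1s1 P2s2 /=.
    apply/andP; split; apply/eqP/ffunP => u; rewrite !ffunE.
      case Cu: (C u) => //; by have := s1C u; rewrite Cu.
    case Cu: (C u) => //; by have := s2C u; rewrite Cu.
move=> s2 _.
have E1 : forall u, ~~ C u -> mrg C s1 s2 u = s1 u by move=> u Cu; rewrite ffunE (negbTE Cu).
have E2 : forall u, C u -> mrg C s1 s2 u = s2 u by move=> u Cu; rewrite ffunE Cu.
by rewrite (proj2 (H1 _ _ E1)) (proj2 (H2 _ _ E2)).
Qed.

Lemma sum_pos (P : pred (config V)) (F : config V -> R) :
  (forall s, P s -> 0 < F s) -> (exists s, P s) -> 0 < \rsum_(s | P s) F s.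
Proof.
move=> Hp [s0 Ps0]; rewrite (bigD1 s0) //=.
have h1 := Hp s0 Ps0.
have h2 : 0 <= \rsum_(s | P s && (s != s0)) F s.
  apply: (big_ind (fun x => 0 <= x)) => //; [lra | move=> x y; lra | ].
  by move=> s /andP[Ps _]; left; apply: Hp.
exact: Rplus_lt_le_0_compat.
Qed.

End Gen.

Lemma Epos_facts b : 0 < exp b /\ exp (- b) = / exp b.
Proof. split; [apply exp_pos | apply exp_Ropp]. Qed.

Lemma cosh_ln_half q : 0 < q -> cosh (ln q / 2) ^ 2 = (q + 2 + / q) / 4.
Proof.
intros hq. unfold cosh. rewrite exp_Ropp.
assert (ha : exp (ln q / 2) * exp (ln q / 2) = q).
{ rewrite -exp_plus. replace (ln q / 2 + ln q / 2) with (ln q) by field. apply exp_ln; auto. }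
assert (hpa : 0 < exp (ln q / 2)) by apply exp_pos.
move: ha hpa; set a := exp (ln q / 2) => ha hpa.
replace (q + 2 + / q) with (a*a + 2 + /(a*a)) by (rewrite ha; reflexivity).
field. lra.
Qed.

Lemma alg_child beta Yp Ym zp zm ap am :
  0 < Yp -> 0 < Ym -> 0 < zp -> 0 < zm ->
  Yp*(exp beta*ap + exp(-beta)*am)/(Yp*(exp beta*zp + exp(-beta)*zm))
  - Ym*(exp(-beta)*ap + exp beta*am)/(Ym*(exp(-beta)*zp + exp beta*zm))
  = tanh beta * (cosh beta ^ 2 / (cosh beta ^ 2 + cosh (ln (zp/zm) / 2) ^ 2 - 1)) * (ap/zp - am/zm).
Proof.
intros hYp hYm hp hm.
rewrite cosh_ln_half; last by apply Rdiv_lt_0_compat.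
unfold tanh, sinh, cosh. rewrite exp_Ropp.
set E := exp beta.
assert (hE : 0 < E) by apply exp_pos.
assert (h1 : 0 < E*zp + /E*zm) by (apply Rplus_lt_0_compat; apply Rmult_lt_0_compat; auto; apply Rinv_0_lt_compat; auto).
assert (h2 : 0 < /E*zp + E*zm) by (apply Rplus_lt_0_compat; apply Rmult_lt_0_compat; auto; apply Rinv_0_lt_compat; auto).
assert (h3 : 0 < E + /E) by (apply Rplus_lt_0_compat; auto; apply Rinv_0_lt_compat; auto).
assert (h4 : ((E+/E)/2)^2 + (zp/zm+2+/(zp/zm))/4 - 1 = (E*zp + /E*zm) * (/E*zp + E*zm) / (4 * zp * zm)).
{ field; lra. }
rewrite h4.
field.
assert (0 < E*zm*E) by (apply Rmult_lt_0_compat; [apply Rmult_lt_0_compat|]; auto).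
assert (0 < E*zp*E) by (apply Rmult_lt_0_compat; [apply Rmult_lt_0_compat|]; auto).
assert (0 < E*E) by (apply Rmult_lt_0_compat; auto).
repeat split; lra.
Qed.

Lemma alg_f beta Zp Zm : 0 < Zp -> 0 < Zm ->
  ln ((exp beta * Zp + exp (-beta) * Zm) / (exp (-beta) * Zp + exp beta * Zm))
  = Defs.f beta (ln (Zp / Zm)).
Proof.
intros hp hm. unfold Defs.f, theta, tanh, sinh, cosh. f_equal.
rewrite !exp_Ropp.
set a := exp (ln (Zp / Zm) / 2).
assert (ha : a * a = Zp / Zm).
{ unfold a. rewrite -exp_plus. replace (ln (Zp/Zm) / 2 + ln (Zp/Zm) / 2) with (ln (Zp/Zm)) by field.
  apply exp_ln. apply Rdiv_lt_0_compat; auto. }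
assert (hZ : Zp = a * a * Zm) by (rewrite ha; field; lra).
rewrite hZ.
set E := exp beta.
assert (hE : 0 < E) by apply exp_pos.
assert (hA : 0 < a) by apply exp_pos.
assert (0 < E*E) by (apply Rmult_lt_0_compat; auto).
assert (0 < a*a) by (apply Rmult_lt_0_compat; auto).
assert (0 < E*E*a*a) by (apply Rmult_lt_0_compat; auto; apply Rmult_lt_0_compat; auto; apply Rmult_lt_0_compat; auto).
field.
repeat split; try lra.
assert (0 < a*a*Zm) by (apply Rmult_lt_0_compat; auto). assert (0 < E*Zm*E) by (apply Rmult_lt_0_compat; auto; apply Rmult_lt_0_compat; auto). lra.
Qed.

Lemma theta_lim beta : ln ((1 + theta beta) / (1 - theta beta)) = 2 * beta.
Proof.
unfold theta, tanh, sinh, cosh. rewrite exp_Ropp.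
set E := exp beta.
assert (hE : 0 < E) by apply exp_pos.
assert (0 < E*E) by (apply Rmult_lt_0_compat; auto).
replace ((1 + (E - / E) / 2 / ((E + / E) / 2)) / (1 - (E - / E) / 2 / ((E + / E) / 2))) with (exp (2 * beta)).
- apply ln_exp.
- replace (2 * beta) with (beta + beta) by ring. rewrite exp_plus. fold E. field. lra.
Qed.

Section Gibbs.
Variables (V : finType) (rho : V) (par : V -> V).
Hypothesis Htree : is_rooted_tree rho par.
Variable beta : R.

Definition econd (S B : pred V) (eta : V -> bool) (s : config V) (u : V) : bool :=
  if S u then (B u ==> (s u == eta u)) else s u.

Lemma adm_ext (S S' B B' : pred V) (eta eta' : V -> bool) (s : config V) :
  (forall u, S u = S' u) -> (forall u, S u -> B u = B' u) ->
  (forall u, S u -> B u -> eta u = eta' u) ->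
  admissible S B eta s = admissible S' B' eta' s.
Proof.
move=> hS hB he; apply: eq_forallb => u; rewrite -hS.
case Su: (S u) => //; rewrite -(hB u Su).
by case Bu: (B u) => //=; rewrite (he u Su Bu).
Qed.

Lemma weight_ext (S S' : pred V) r (s : config V) : (forall u, S u = S' u) ->
  weight par beta S r s = weight par beta S' r s.
Proof. by move=> h; rewrite /weight; congr exp; congr Rmult; apply: eq_bigl => u; rewrite h. Qed.

Lemma weight_dep (S : pred V) r (s t : config V) :
  (forall u, S u -> u != r -> s u = t u /\ s (par u) = t (par u)) ->
  weight par beta S r s = weight par beta S r t.
Proof.
move=> h; rewrite /weight; congr exp; congr Rmult; apply: eq_bigr => u /andP[Su nr].
by have [-> ->] := h u Su nr.
Qed.

Lemma weight_pos (S : pred V) r (s : config V) : 0 < weight par beta S r s.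
Proof. exact: exp_pos. Qed.

Lemma split_w (S : pred V) (r w : V) (B : pred V) (eta : V -> bool) (b : bool)
  (g1 g2 : config V -> R) :
  S r -> S w -> par w = r -> ~~ desc par w r ->
  (forall u, S u -> u != r -> S (par u)) ->
  (forall s t : config V, (forall u, ~~ desc par w u -> s u = t u) -> g1 s = g1 t) ->
  (forall s t : config V, (forall u, desc par w u -> s u = t u) -> g2 s = g2 t) ->
  \rsum_(s | admissible S B eta s && (s r == b)) (g1 s * g2 s * weight par beta S r s)
  = (\rsum_(s | admissible (fun u => S u && ~~ desc par w u) B eta s && (s r == b))
        (g1 s * weight par beta (fun u => S u && ~~ desc par w u) r s)) *
    (\rsum_(s | admissible (fun u => S u && desc par w u) B eta s)
        (exp (beta * (spin (s w) * spin b)) * g2 s *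
         weight par beta (fun u => S u && desc par w u) w s)).
Proof.
move=> Sr Sw pw nwr Scl hg1 hg2.
set S1 := fun u => S u && ~~ desc par w u.
set D := fun u => S u && desc par w u.
have wdec : forall s : config V, s r = b -> weight par beta S r s =
   weight par beta S1 r s * (exp (beta * (spin (s w) * spin b)) * weight par beta D w s).
  move=> s sr; rewrite /weight -!exp_plus; congr exp.
  rewrite (bigID (desc par w)) /= Rmult_plus_distr_l Rplus_comm; congr Rplus.
    congr (_ * _); apply: eq_bigl => u; rewrite /S1; by rewrite andbAC.
  rewrite -Rmult_plus_distr_l; congr Rmult.
  rewrite (bigD1 w) /=; last first.
    rewrite Sw (desc_refl Htree) andbT; apply/negP => /eqP e; subst w.
    by rewrite (desc_refl Htree) in nwr.
  rewrite pw sr; congr Rplus; apply: eq_bigl => u; rewrite /D.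
  case: (boolP (desc par w u)) => du; rewrite ?andbF ?andbT //.
  have -> : (u != r) = true.
    apply/negP => /eqP e; subst u; by rewrite du in nwr.
  by rewrite andbT.
rewrite (eq_bigr (fun s => (g1 s * weight par beta S1 r s) *
   (exp (beta * (spin (s w) * spin b)) * g2 s * weight par beta D w s))); last first.
  move=> s /andP[_ /eqP sr]; rewrite wdec //; ring.
rewrite (eq_bigl (fun s => ([forall u, ~~ desc par w u ==> econd S1 B eta s u] && (s r == b))
   && [forall u, desc par w u ==> econd D B eta s u])); last first.
  move=> s; rewrite andbAC; congr andb.
  apply/forallP/andP.
    move=> h; split; apply/forallP => u; apply/implyP => du; have := h u;
      by rewrite /econd /S1 /D ?du ?(negbTE du) ?andbT ?andbF.
  move=> [/forallP h1 /forallP h2] u.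
  case: (boolP (desc par w u)) => du.
    by have := h2 u; rewrite du /econd /D du andbT.
  by have := h1 u; rewrite du /econd /S1 du andbT.
have H2 : forall s t : config V, (forall u, desc par w u -> s u = t u) ->
   [forall u, desc par w u ==> econd D B eta s u] = [forall u, desc par w u ==> econd D B eta t u] /\
   exp (beta * (spin (s w) * spin b)) * g2 s * weight par beta D w s = exp (beta * (spin (t w) * spin b)) * g2 t * weight par beta D w t.
  move=> s t h; split.
    apply: eq_forallb => u; case: (boolP (desc par w u)) => du //=.
    by rewrite /econd h.
  have -> : s w = t w by apply: h; exact: (desc_refl Htree).
  rewrite (hg2 s t h); congr Rmult.
  apply: weight_dep => u /andP[_ du] nuw; split; first exact: h.
  by apply: h; apply: (desc_par2 Htree).
have H1 : forall s t : config V, (forall u, ~~ desc par w u -> s u = t u) ->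
   ([forall u, ~~ desc par w u ==> econd S1 B eta s u] && (s r == b)) = ([forall u, ~~ desc par w u ==> econd S1 B eta t u] && (t r == b)) /\
   g1 s * weight par beta S1 r s = g1 t * weight par beta S1 r t.
  move=> s t h; split.
    congr andb; last by rewrite h.
    apply: eq_forallb => u; case: (boolP (desc par w u)) => du //=.
    by rewrite /econd h.
  rewrite (hg1 s t h); congr Rmult.
  apply: weight_dep => u /andP[_ du] nur; split; first exact: h.
  apply: h; apply/negP => /(desc_par Htree); exact/negP.
rewrite (sum_split H1 H2).
congr Rmult; apply: eq_bigl => s.
  rewrite andbAC; congr andb.
  apply/andP/forallP.
    move=> [/forallP h1 /forallP h2] u; case: (boolP (desc par w u)) => du.
      by have := h2 u; rewrite du /econd /S1 du andbF.
    by have := h1 u; rewrite du.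
  move=> h; split; apply/forallP => u; apply/implyP => du; have := h u;
    by rewrite /econd /S1 ?du ?(negbTE du) ?andbT ?andbF.
apply/andP/forallP.
  move=> [/forallP h1 /forallP h2] u; case: (boolP (desc par w u)) => du.
    by have := h1 u; rewrite du.
  by have := h2 u; rewrite du /econd /D (negbTE du) andbF.
move=> h; split; apply/forallP => u; apply/implyP => du; have := h u;
  by rewrite /econd /D ?du ?(negbTE du) ?andbT ?andbF.
Qed.
End Gibbs.

Section Gibbs2.
Variables (V : finType) (rho : V) (par : V -> V).
Hypothesis Htree : is_rooted_tree rho par.
Variable beta : R.

Definition Fs (S : pred V) (r : V) (B : pred V) (eta : V -> bool) (b : bool)
  (G : config V -> R) : R :=
  \rsum_(s | admissible S B eta s && (s r == b)) (G s * weight par beta S r s).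

Definition wit (S B : pred V) (eta : V -> bool) (r : V) (c : bool) : config V :=
  [ffun u => if S u then (if B u then eta u else if u == r then c else true) else true].

Lemma wit_adm (S B : pred V) (eta : V -> bool) r (c : bool) : admissible S B eta (wit S B eta r c).
Proof.
apply/forallP => u; rewrite /wit ffunE.
by case: (S u) => //; case: (B u) => //=.
Qed.

Lemma wit_r (S B : pred V) eta r c : S r -> ~~ B r -> wit S B eta r c r = c.
Proof. by move=> Sr nB; rewrite /wit ffunE Sr (negbTE nB) eqxx. Qed.

Lemma Fs1_pos (S : pred V) r (B : pred V) (eta : V -> bool) (b : bool) : S r -> ~~ B r -> 0 < Fs S r B eta b (fun _ => 1).
Proof.
move=> Sr nB; apply: sum_pos.
  move=> s _; rewrite Rmult_1_l; exact: weight_pos.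
exists (wit S B eta r b); by rewrite wit_adm wit_r // eqxx.
Qed.

Lemma den_pos (S : pred V) r (B : pred V) (eta : V -> bool) : 0 < \rsum_(s | admissible S B eta s) weight par beta S r s.
Proof.
apply: sum_pos; first by move=> s _; exact: weight_pos.
by exists (wit S B eta r true); rewrite wit_adm.
Qed.

Lemma gibbs_div (S : pred V) r (B : pred V) (eta : V -> bool) (E1 E2 : pred (config V)) :
  \rsum_(s | admissible S B eta s && E2 s) weight par beta S r s <> 0 ->
  gibbs par beta S r B eta E1 / gibbs par beta S r B eta E2 =
  (\rsum_(s | admissible S B eta s && E1 s) weight par beta S r s) /
  (\rsum_(s | admissible S B eta s && E2 s) weight par beta S r s).
Proof.
move=> h; rewrite /gibbs.
have := den_pos S r B eta => hd.
field; split => //; lra.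
Qed.

Lemma collapse (S B : pred V) r (eta : V -> bool) (K : pred V) (b : bool) (G : config V -> R) :
  (forall s t : config V, (forall u, K u -> s u = t u) -> G s = G t) ->
  \big[Rplus/0]_(xi : config V | [forall u, K u || xi u])
     (G xi * \rsum_(s | admissible S B eta s &&
                 ((s r == b) && [forall u, K u ==> (s u == xi u)])) weight par beta S r s)
  = Fs S r B eta b G.
Proof.
move=> hG.
under eq_bigr do rewrite big_distrr.
rewrite (exchange_big_dep (fun s => admissible S B eta s && (s r == b))) /=; last first.
  by move=> xi s _ /andP[-> /andP[-> _]].
apply: eq_bigr => s /andP[adm sr].
pose xs : config V := [ffun u => if K u then s u else true].
rewrite (big_pred1 xs) /=.
  congr Rmult; apply: hG => u Ku; by rewrite ffunE Ku.
move=> xi /=; rewrite adm sr /=.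
apply/andP/eqP.
  move=> [/forallP h1 /forallP h2]; apply/ffunP => u; rewrite ffunE.
  case Ku: (K u); first by have := h2 u; rewrite Ku => /eqP.
  by have := h1 u; rewrite Ku.
move=> ->; split; apply/forallP => u; rewrite ffunE; case: (K u) => //=.
Qed.

End Gibbs2.

Section Model.
Variables (V : finType) (rho : V) (par : V -> V).
Hypothesis Htree : is_rooted_tree rho par.
Variables (beta : R) (tau : V -> bool) (Th : {set V}).

Definition Bf (u : V) : pred V := fun x => desc par u x && leafT rho par x.
Definition Fu (u : V) (b : bool) (G : config V -> R) :=
  Fs par beta (desc par u) u (Bf u) tau b G.

Lemma Fu1_pos u b : ~~ leafT rho par u -> 0 < Fu u b (fun _ => 1).
Proof.
move=> nl; apply: Fs1_pos; first exact: (desc_refl Htree).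
by rewrite /Bf (negbTE nl) andbF.
Qed.

Lemma integ_eq u b (G : config V -> R) : ~~ leafT rho par u ->
  (forall s t : config V, (forall x, dHat rho par Th u x -> s x = t x) -> G s = G t) ->
  integ rho par Th u (Q rho par beta tau Th b u) G = Fu u b G / Fu u b (fun _ => 1).
Proof.
move=> nl hG.
have hN : \rsum_(s | admissible (desc par u) (fun x => desc par u x && leafT rho par x) tau s
            && (s u == b)) weight par beta (desc par u) u s = Fu u b (fun _ => 1).
  by rewrite /Fu /Fs; apply: eq_bigr => s _; rewrite Rmult_1_l.
have hNp := Fu1_pos b nl.
rewrite /integ /Q /mu.
have hNz : \rsum_(s | admissible (desc par u) (fun x => desc par u x && leafT rho par x) tau s
            && (s u == b)) weight par beta (desc par u) u s <> 0 by rewrite hN; lra.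
under eq_bigr => xi _ do rewrite (gibbs_div _ hNz).
rewrite hN.
under eq_bigr => xi _ do rewrite /Rdiv -Rmult_assoc.
rewrite -big_distrl /=.
by rewrite collapse.
Qed.

Lemma markov v w b (G : config V -> R) : child rho par v w ->
  (forall s t : config V, (forall x, desc par w x -> s x = t x) -> G s = G t) ->
  Fu v b G = Fs par beta (fun x => desc par v x && ~~ desc par w x) v (Bf v) tau b (fun _ => 1) *
    (exp (beta * (spin true * spin b)) * Fu w true G +
     exp (beta * (spin false * spin b)) * Fu w false G).
Proof.
move=> cvw hG.
have [pw nwr] := child_par cvw.
rewrite /Fu /Fs.
under eq_bigr do rewrite -(Rmult_1_l (G _)).
have cl : forall u, desc par v u -> u != v -> desc par v (par u).
  move=> u du nuv; exact: (desc_par2 Htree).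
rewrite (@split_w _ _ _ Htree beta _ _ w _ _ b (fun _ => 1) G (desc_refl Htree v)
  (child_desc Htree cvw) pw (child_not_desc Htree cvw) cl) //.
congr Rmult.
have dwv : forall x, desc par w x -> desc par v x.
  move=> x; apply: (desc_trans Htree); exact: (child_desc Htree).
rewrite (bigID (fun s : config V => s w)) /=; congr Rplus.
- rewrite big_distrr; apply: eq_big => s.
    rewrite eqb_id; congr andb; apply: adm_ext => x.
    + by case: (boolP (desc par w x)) => h; rewrite ?andbT ?andbF ?dwv.
    + by move=> /andP[_ h]; rewrite /Bf h dwv.
    + by [].
  move=> /andP[_ sw]; rewrite sw Rmult_assoc; congr (_ * (_ * _)).
  apply: weight_ext => x.
  by case: (boolP (desc par w x)) => h; rewrite ?andbT ?andbF ?dwv.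
- rewrite big_distrr; apply: eq_big => s.
    rewrite eqbF_neg; congr andb; apply: adm_ext => x.
    + by case: (boolP (desc par w x)) => h; rewrite ?andbT ?andbF ?dwv.
    + by move=> /andP[_ h]; rewrite /Bf h dwv.
    + by [].
  move=> /andP[_ sw]; rewrite (negbTE sw) Rmult_assoc; congr (_ * (_ * _)).
  apply: weight_ext => x.
  by case: (boolP (desc par w x)) => h; rewrite ?andbT ?andbF ?dwv.
Qed.


Lemma xstar_eq w : ~~ leafT rho par w ->
  xstar rho par beta tau w = ln (Fu w true (fun _ => 1) / Fu w false (fun _ => 1)).
Proof.
move=> nl; rewrite /xstar /mu.
have hNf : \rsum_(s | admissible (desc par w) (fun x => desc par w x && leafT rho par x) tau s
            && ~~ (s w)) weight par beta (desc par w) w s = Fu w false (fun _ => 1).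
  rewrite /Fu /Fs; apply: eq_big => s; first by rewrite eqbF_neg.
  by rewrite Rmult_1_l.
have hNt : \rsum_(s | admissible (desc par w) (fun x => desc par w x && leafT rho par x) tau s
            && (s w)) weight par beta (desc par w) w s = Fu w true (fun _ => 1).
  rewrite /Fu /Fs; apply: eq_big => s; first by rewrite eqb_id.
  by rewrite Rmult_1_l.
have hNz : \rsum_(s | admissible (desc par w) (fun x => desc par w x && leafT rho par x) tau s
            && ~~ (s w)) weight par beta (desc par w) w s <> 0.
  rewrite hNf; have := Fu1_pos false nl; lra.
by rewrite (gibbs_div _ hNz) hNt hNf.
Qed.

Lemma perchild v w (G : config V -> R) : child rho par v w ->
  ~~ leafT rho par v -> ~~ leafT rho par w ->
  (forall s t : config V, (forall x, dHat rho par Th w x -> s x = t x) -> G s = G t) ->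
  integ rho par Th v (Q rho par beta tau Th true v) G - integ rho par Th v (Q rho par beta tau Th false v) G
  = theta beta * Dstar rho par beta tau w *
    (integ rho par Th w (Q rho par beta tau Th true w) G - integ rho par Th w (Q rho par beta tau Th false w) G).
Proof.
move=> cvw nlv nlw hG.
have dwv : forall x, desc par w x -> desc par v x.
  move=> x; apply: (desc_trans Htree); exact: (child_desc Htree).
have hGv : forall s t : config V, (forall x, dHat rho par Th v x -> s x = t x) -> G s = G t.
  move=> s t h; apply: hG => x /andP[lx dx]; apply: h; by rewrite /dHat lx dwv.
have hGd : forall s t : config V, (forall x, desc par w x -> s x = t x) -> G s = G t.
  move=> s t h; apply: hG => x /andP[lx dx]; exact: h.
have h1 : forall s t : config V, (forall x, desc par w x -> s x = t x) -> (fun _ : config V => 1) s = (fun _ => 1) t by [].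
rewrite !integ_eq //.
rewrite (markov true cvw hGd) (markov false cvw hGd) (markov true cvw h1) (markov false cvw h1).
rewrite /Dstar (xstar_eq nlw) /theta.
set Yp' := Fs par beta _ v (Bf v) tau true (fun _ => 1).
set Ym' := Fs par beta _ v (Bf v) tau false (fun _ => 1).
have hYp : 0 < Yp'.
  apply: Fs1_pos; first by rewrite (desc_refl Htree) (child_not_desc Htree).
  by rewrite /Bf (negbTE nlv) andbF.
have hYm : 0 < Ym'.
  apply: Fs1_pos; first by rewrite (desc_refl Htree) (child_not_desc Htree).
  by rewrite /Bf (negbTE nlv) andbF.
have e1 : exp (beta * (spin true * spin true)) = exp beta by rewrite /spin; f_equal; ring.
have e2 : exp (beta * (spin false * spin false)) = exp beta by rewrite /spin; f_equal; ring.
have e3 : exp (beta * (spin false * spin true)) = exp (- beta) by rewrite /spin; f_equal; ring.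
have e4 : exp (beta * (spin true * spin false)) = exp (- beta) by rewrite /spin; f_equal; ring.
rewrite e1 e2 e3 e4.
apply: alg_child => //; exact: Fu1_pos.
Qed.

End Model.

Section Hat.
Variables (V : finType) (rho : V) (par : V -> V).
Hypothesis Htree : is_rooted_tree rho par.
Variables (beta : R) (Th : {set V}).
Hypothesis HTh : good_subtree rho par Th.

Lemma Fs_ext (S S' : pred V) r B eta b G : (forall u, S u = S' u) ->
  Fs par beta S r B eta b G = Fs par beta S' r B eta b G.
Proof.
move=> h; rewrite /Fs; apply: eq_big => s.
  by rewrite (@adm_ext _ S S' B B eta eta s h).
by rewrite (weight_ext _ _ _ _ h).
Qed.

Lemma Th_anc u a : u \in Th -> desc par a u -> a \in Th.
Proof.
move=> uT /(descP Htree) [k <-].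
elim: k => [|k IH] //=.
case: (eqVneq (iter k par u) rho) => h.
  by rewrite h (proj1 Htree) -h.
exact: (proj2 (proj2 HTh)).
Qed.

Lemma Th_nl u : u \in Th -> ~~ leafT rho par u.
Proof. exact: (proj1 (proj2 HTh)). Qed.

Definition Dw (u : V) : pred V := fun x => desc par u x && (x \in Th).

Lemma Dw_pred1 w : w \in Th -> leafHat rho par Th w -> forall x, Dw w x = (x == w).
Proof.
move=> wT lw x; rewrite /Dw.
case: (eqVneq x w) => [->|nxw]; first by rewrite (desc_refl Htree) wT.
apply/negP => /andP[dx xT].
have [c cwc dcx] := desc_child Htree dx nxw.
move/andP: lw => [_ /forallP /(_ c)]; rewrite cwc /=.
by rewrite (Th_anc xT dcx).
Qed.

Variables (v : V) (xi : config V).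
Hypotheses (Hv : v \in Th) (Hvnl : ~~ leafHat rho par Th v).

Definition B0 := dHat rho par Th v.
Definition Sws (ws : seq V) : pred V := fun u => Dw v u && all (fun w => ~~ desc par w u) ws.
Definition ZS ws b := Fs par beta (Sws ws) v B0 xi b (fun _ => 1).
Definition Rw w b := \rsum_(s | admissible (Dw w) B0 xi s)
   (exp (beta * (spin (s w) * spin b)) * 1 * weight par beta (Dw w) w s).
Definition isch w := child rho par v w && (w \in Th).

Lemma step ws w b : isch w -> w \notin ws -> all isch ws ->
  ZS ws b = ZS (rcons ws w) b * Rw w b.
Proof.
move=> /andP[cw wT] nw aws.
have [pw nwr] := child_par cw.
have Sv : Sws ws v.
  rewrite /Sws /Dw (desc_refl Htree) Hv /=; apply/allP => w' /(allP aws) /andP[c' _].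
  exact: (child_not_desc Htree).
have disj : forall x w', w' \in ws -> desc par w x -> ~~ desc par w' x.
  move=> x w' w'in dx; apply/negP => dx'.
  have /andP[c' _] := allP aws w' w'in.
  have e := child_disj Htree cw c' dx dx'; subst w'.
  by rewrite w'in in nw.
have Sw : Sws ws w.
  rewrite /Sws /Dw (child_desc Htree cw) wT /=; apply/allP => w' w'in.
  exact: (disj _ _ w'in (desc_refl Htree w)).
have cl : forall u, Sws ws u -> u != v -> Sws ws (par u).
  move=> u /andP[/andP[du uT] au] nuv; apply/andP; split.
    apply/andP; split; first exact: (desc_par2 Htree).
    apply: (proj2 (proj2 HTh)) => //; exact: (not_desc_of_rho_ne Htree du).
  apply/allP => w' w'in; apply/negP => /(desc_par Htree) h.
  by have := allP au w' w'in; rewrite h.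
rewrite /ZS /Fs.
under eq_bigr do rewrite -(Rmult_1_l 1).
rewrite (@split_w _ _ _ Htree beta _ _ w _ _ b (fun _ => 1) (fun _ => 1) Sv Sw pw
  (child_not_desc Htree cw) cl) //.
congr Rmult.
  apply: (Fs_ext (S:=fun u => Sws ws u && ~~ desc par w u)) => u.
  by rewrite /Sws all_rcons andbA andbAC.
rewrite /Rw; apply: eq_big => s.
  apply: adm_ext => // x.
  rewrite /Sws /Dw; case: (boolP (desc par w x)) => dx; rewrite ?andbT ?andbF //.
  have -> : desc par v x by apply: (desc_trans Htree (child_desc Htree cw)).
  rewrite /=; case: (x \in Th) => //=.
  by apply/allP => w' w'in; exact: disj.
move=> _; congr Rmult; apply: weight_ext => x.
rewrite /Sws /Dw; case: (boolP (desc par w x)) => dx; rewrite ?andbT ?andbF //.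
have -> : desc par v x by apply: (desc_trans Htree (child_desc Htree cw)).
rewrite /=; case: (x \in Th) => //=.
by apply/allP => w' w'in; exact: disj.
Qed.


Lemma ZS_ind ws0 ws b : uniq (ws0 ++ ws) -> all isch (ws0 ++ ws) ->
  ZS ws0 b = ZS (ws0 ++ ws) b * \big[Rmult/1]_(w <- ws) Rw w b.
Proof.
elim: ws ws0 => [|w ws IH] ws0 hu ha.
  by rewrite cats0 big_nil Rmult_1_r.
have hw : w \notin ws0.
  by move: hu; rewrite cat_uniq /= => /and3P[_ /norP[h _] _]; exact: h.
have ha0 : all isch ws0 by move: ha; rewrite all_cat => /andP[].
have hiw : isch w by move: ha; rewrite all_cat /= => /and3P[].
rewrite (@step ws0 w b hiw hw ha0) big_cons (IH (rcons ws0 w)); last 2 first.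
- by rewrite cat_rcons.
- by rewrite cat_rcons.
by rewrite cat_rcons; ring.
Qed.

Lemma ZS_end cs b : (forall w, isch w -> w \in cs) -> all isch cs -> ZS cs b = 1.
Proof.
move=> hall hcs.
have e : forall x, Sws cs x = (x == v).
  move=> x; rewrite /Sws /Dw.
  case: (eqVneq x v) => [->|nxv].
    rewrite (desc_refl Htree) Hv /=; apply/allP => w /(allP hcs) /andP[c _].
    exact: (child_not_desc Htree).
  apply/negP => /andP[/andP[dx xT] /allP al].
  have [c cvc dcx] := desc_child Htree dx nxv.
  have cin : c \in cs by apply: hall; rewrite /isch cvc (Th_anc xT dcx).
  by have := al c cin; rewrite dcx.
rewrite /ZS (Fs_ext _ _ _ _ _ e) /Fs.
pose sb : config V := [ffun u => if u == v then b else true].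
rewrite (big_pred1 sb).
  rewrite Rmult_1_l /weight big_pred0; first by rewrite Rmult_0_r exp_0.
  by move=> x; case: eqP => //= ->; rewrite eqxx.
move=> s /=; apply/andP/eqP.
  move=> [/forallP h /eqP sv]; apply/ffunP => u; rewrite ffunE.
  case: eqP => [->|/eqP nuv] //; by have := h u; rewrite (negbTE nuv).
move=> ->; split; last by rewrite ffunE eqxx.
apply/forallP => u; rewrite ffunE; case: eqP => [->|] //=.
by rewrite /B0 /dHat (negbTE Hvnl).
Qed.


Lemma xhat_eq u : u \in Th -> ~~ leafHat rho par Th u ->
  xhat rho par beta Th u xi =
  ln (Fs par beta (Dw u) u (dHat rho par Th u) xi true (fun _ => 1) /
      Fs par beta (Dw u) u (dHat rho par Th u) xi false (fun _ => 1)).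
Proof.
move=> uT nl; rewrite /xhat /muhat.
have nB : ~~ dHat rho par Th u u by rewrite /dHat (negbTE nl).
have Su : Dw u u by rewrite /Dw (desc_refl Htree) uT.
have hNf : \rsum_(s | admissible (Dw u) (dHat rho par Th u) xi s && ~~ (s u))
    weight par beta (Dw u) u s = Fs par beta (Dw u) u (dHat rho par Th u) xi false (fun _ => 1).
  rewrite /Fs; apply: eq_big => s; first by rewrite eqbF_neg.
  by rewrite Rmult_1_l.
have hNt : \rsum_(s | admissible (Dw u) (dHat rho par Th u) xi s && (s u))
    weight par beta (Dw u) u s = Fs par beta (Dw u) u (dHat rho par Th u) xi true (fun _ => 1).
  rewrite /Fs; apply: eq_big => s; first by rewrite eqb_id.
  by rewrite Rmult_1_l.
have hNz : \rsum_(s | admissible (Dw u) (dHat rho par Th u) xi s && ~~ (s u))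
    weight par beta (Dw u) u s <> 0.
  rewrite hNf; have := Fs1_pos par beta xi false Su nB; lra.
by rewrite (gibbs_div _ hNz) hNt hNf.
Qed.

Lemma Rw_pos w b : isch w -> 0 < Rw w b.
Proof.
move=> _; apply: sum_pos.
  move=> s _; rewrite Rmult_1_r; apply: Rmult_lt_0_compat; [exact: exp_pos | exact: weight_pos].
by exists (wit (Dw w) B0 xi w true); rewrite wit_adm.
Qed.

Lemma dHat_vw w x : isch w -> Dw w x -> B0 x = dHat rho par Th w x.
Proof.
move=> /andP[cw _] /andP[dx _]; rewrite /B0 /dHat dx.
by rewrite (desc_trans Htree (child_desc Htree cw) dx) .
Qed.

Lemma Rw_split w b : isch w ->
  Rw w b = exp (beta * (spin true * spin b)) *
             Fs par beta (Dw w) w (dHat rho par Th w) xi true (fun _ => 1) +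
           exp (beta * (spin false * spin b)) *
             Fs par beta (Dw w) w (dHat rho par Th w) xi false (fun _ => 1).
Proof.
move=> iw; rewrite /Rw /Fs (bigID (fun s : config V => s w)) /=; congr Rplus.
- rewrite big_distrr; apply: eq_big => s.
    rewrite eqb_id; congr andb; apply: adm_ext => // x; exact: dHat_vw.
  by move=> /andP[_ sw]; rewrite sw /=; ring.
- rewrite big_distrr; apply: eq_big => s.
    rewrite eqbF_neg; congr andb; apply: adm_ext => // x; exact: dHat_vw.
  by move=> /andP[_ sw]; rewrite (negbTE sw) /=; ring.
Qed.

Lemma Rw_leaf w b : isch w -> leafHat rho par Th w ->
  Rw w b = exp (beta * (spin (xi w) * spin b)).
Proof.
move=> iw lw.
have wT : w \in Th by case/andP: iw.
have cw : child rho par v w by case/andP: iw.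
have e := Dw_pred1 wT lw.
have Bw : B0 w by rewrite /B0 /dHat lw (child_desc Htree cw).
pose sw : config V := [ffun u => if u == w then xi w else true].
rewrite /Rw (big_pred1 sw).
  rewrite /sw ffunE eqxx Rmult_1_r /weight big_pred0; first by rewrite Rmult_0_r exp_0 Rmult_1_r.
  by move=> x; rewrite e; case: eqP => //= ->; rewrite eqxx.
move=> s /=; apply/forallP/eqP.
  move=> h; apply/ffunP => u; rewrite ffunE; have := h u; rewrite e.
  by case: eqP => [->|] //=; rewrite Bw => /eqP.
move=> -> u; rewrite ffunE e; case: eqP => [->|] //=.
by rewrite Bw /= eqxx.
Qed.

Lemma lnR w : isch w -> ln (Rw w true / Rw w false) = fext beta (xext rho par beta Th w xi).
Proof.
move=> iw; have wT : w \in Th by case/andP: iw.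
rewrite /xext.
case: (boolP (leafHat rho par Th w)) => lw.
  rewrite !Rw_leaf // /Rdiv -exp_Ropp -exp_plus ln_exp.
  case: (xi w); rewrite /= ?theta_lim /spin; ring.
rewrite !Rw_split // /= (xhat_eq wT lw).
have Sw : Dw w w by rewrite /Dw (desc_refl Htree) wT.
have nB : ~~ dHat rho par Th w w by rewrite /dHat (negbTE lw).
have e1 : exp (beta * (spin true * spin true)) = exp beta by rewrite /spin; f_equal; ring.
have e2 : exp (beta * (spin false * spin false)) = exp beta by rewrite /spin; f_equal; ring.
have e3 : exp (beta * (spin false * spin true)) = exp (- beta) by rewrite /spin; f_equal; ring.
have e4 : exp (beta * (spin true * spin false)) = exp (- beta) by rewrite /spin; f_equal; ring.
rewrite e1 e2 e3 e4; apply: alg_f; exact: Fs1_pos.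
Qed.


Lemma prod_pos (r : seq V) (a : V -> R) : (forall w, w \in r -> 0 < a w) ->
  0 < \big[Rmult/1]_(w <- r) a w.
Proof.
elim: r => [|x r IH] h; first by rewrite big_nil; lra.
rewrite big_cons; apply: Rmult_lt_0_compat; first by apply: h; rewrite inE eqxx.
by apply: IH => w wr; apply: h; rewrite inE wr orbT.
Qed.

Lemma ln_prod (r : seq V) (a b : V -> R) :
  (forall w, w \in r -> 0 < a w /\ 0 < b w) ->
  ln (\big[Rmult/1]_(w <- r) a w / \big[Rmult/1]_(w <- r) b w) =
  \big[Rplus/0]_(w <- r) ln (a w / b w).
Proof.
elim: r => [|x r IH] h.
  by rewrite !big_nil /Rdiv Rinv_1 Rmult_1_l ln_1.
have hx := h x (mem_head x r).
have hr : forall w, w \in r -> 0 < a w /\ 0 < b w by move=> w wr; apply: h; rewrite inE wr orbT.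
have pa := prod_pos (fun w wr => proj1 (hr w wr)).
have pb := prod_pos (fun w wr => proj2 (hr w wr)).
rewrite !big_cons -IH //.
have -> : a x * \big[Rmult/1]_(w <- r) a w / (b x * \big[Rmult/1]_(w <- r) b w) =
  (a x / b x) * (\big[Rmult/1]_(w <- r) a w / \big[Rmult/1]_(w <- r) b w).
  by field; split; lra.
apply: ln_mult; apply: Rdiv_lt_0_compat; lra.
Qed.

Lemma hat_rec : xhat rho par beta Th v xi =
  \rsum_(w | child rho par v w && (w \in Th)) fext beta (xext rho par beta Th w xi).
Proof.
rewrite (xhat_eq Hv Hvnl).
pose cs := [seq w <- index_enum V | isch w].
have ucs : uniq cs by apply: filter_uniq; exact: index_enum_uniq.
have acs : all isch cs by apply: filter_all.
have mcs : forall w, isch w -> w \in cs by move=> w iw; rewrite mem_filter iw mem_index_enum.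
have hZ : forall b, Fs par beta (Dw v) v (dHat rho par Th v) xi b (fun _ => 1) =
    \big[Rmult/1]_(w <- cs) Rw w b.
  move=> b; rewrite (Fs_ext (S' := Sws [::])); last by move=> u; rewrite /Sws andbT.
  by rewrite -/(ZS [::] b) (ZS_ind (ws0:=[::]) (ws:=cs)) //= ZS_end // Rmult_1_l.
rewrite !hZ ln_prod; last by move=> w /(allP acs) iw; split; apply: Rw_pos.
rewrite big_filter; apply: eq_bigr => w iw; exact: lnR.
Qed.

End Hat.

Lemma muhat_dep (V : finType) (rho : V) (par : V -> V) beta (Th : {set V}) w (s t : config V) E :
  (forall x, dHat rho par Th w x -> s x = t x) ->
  muhat rho par beta Th w s E = muhat rho par beta Th w t E.
Proof.
move=> h.
have ha : forall c, admissible (fun u => desc par w u && (u \in Th)) (dHat rho par Th w) s c =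
                    admissible (fun u => desc par w u && (u \in Th)) (dHat rho par Th w) t c.
  by move=> c; apply: adm_ext => // x _ Bx; exact: h.
rewrite /muhat /gibbs; congr (_ / _); apply: eq_bigl => c; by rewrite ha.
Qed.

Lemma xext_dep (V : finType) (rho : V) (par : V -> V) beta (Th : {set V}) w (s t : config V) :
  is_rooted_tree rho par ->
  (forall x, dHat rho par Th w x -> s x = t x) ->
  xext rho par beta Th w s = xext rho par beta Th w t.
Proof.
move=> Htree h; rewrite /xext.
case: (boolP (leafHat rho par Th w)) => lw.
  by rewrite h // /dHat lw (desc_refl Htree).
by rewrite /xhat !(muhat_dep _ _ h).
Qed.

Theorem mainTheorem9 (V : finType) (rho : V) (par : V -> V)
  (Htree : is_rooted_tree rho par)
  (beta : R) (Hbeta : (0 < beta)%R) (tau : V -> bool) (Th : {set V})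
  (HTh : good_subtree rho par Th)
  (v : V) (Hv : v \in Th) (Hvnl : ~~ leafHat rho par Th v) :
  m rho par beta tau Th v =
  (theta beta *
   \rsum_(w | child rho par v w && (w \in Th))
     (Dstar rho par beta tau w *
      (integ rho par Th w (Q rho par beta tau Th true w)
             (fun xi => fext beta (xext rho par beta Th w xi))
     - integ rho par Th w (Q rho par beta tau Th false w)
             (fun xi => fext beta (xext rho par beta Th w xi)))))%R.
Proof.
have nlv := Th_nl HTh Hv.
have hx : forall b, integ rho par Th v (Q rho par beta tau Th b v) (xhat rho par beta Th v) =
   \rsum_(w | child rho par v w && (w \in Th))
     integ rho par Th v (Q rho par beta tau Th b v) (fun xi => fext beta (xext rho par beta Th w xi)).
  move=> b; rewrite [LHS]/integ.
  rewrite (eq_bigr (fun xi => \rsum_(w | child rho par v w && (w \in Th))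
     (fext beta (xext rho par beta Th w xi) * Q rho par beta tau Th b v xi))); last first.
    by move=> xi _; rewrite (hat_rec Htree beta HTh xi Hv Hvnl) big_distrl.
  by rewrite exchange_big.
rewrite /m !hx big_distrr.
have sub : forall (P : pred V) (a b : V -> R),
    \rsum_(w | P w) a w - \rsum_(w | P w) b w = \rsum_(w | P w) (a w - b w).
  move=> P a b; rewrite /Rminus big_split /=; congr Rplus.
  by rewrite (big_morph Ropp Ropp_plus_distr Ropp_0).
rewrite sub; apply: eq_bigr => w /andP[cw wT] /=.
rewrite (perchild Htree beta tau cw nlv (Th_nl HTh wT)); first ring.
by move=> s t h; rewrite (xext_dep _ Htree h).
Qed.
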